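(* Skeptic can weakly force the event \[ E_2:=\{\xi\in\Omega:\ |s_n|>\sqrt n-1\ \text{for infinitely many } n\}. \]
   Context: Fair-coin game: in rounds $n=1,2,\dots$ Skeptic announces $M_n\in\mathbb{R}$ (depending only on $x_1,\dots,x_{n-1}$), then Reality announces $x_n\in\{-1,1\}$. A path is an infinite sequence $\xi=x_1x_2\cdots\in\{-1,1\}^{\mathbb{N}}$, and $\Omega$ is the set of paths. We write $s_n:=x_1+\cdots+x_n$, with $s_0=0$. A strategy $\mathcal{P}$ assigns a real bet $\mathcal{P}(x_1\cdots x_{n-1})$ to each finite sequence. Its capital process with zero initial capital is $\mathcal{K}^{\mathcal{P}}_n(\xi)=\sum_{k=1}^n\mathcal{P}(x_1\cdots x_{k-1})x_k$. Skeptic weakly forces $E\subseteq\Omega$ if there is a strategy $\mathcal{P}$ such that $\mathcal{K}^{\mathcal{P}}_n(\xi)\ge-1$ for all $\xi\in\Omega$ and $n\ge0$, and $\limsup_n\mathcal{K}^{\mathcal{P}}_n(\xi)=\infty$ for every $\xi\notin E$. *)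

(* Defs.v *)
From Stdlib Require Import Reals List.
Open Scope R_scope.

Definition move_val (b : bool) : R := if b then 1 else -1.

(* Paths: infinite sequences x_1 x_2 ...; x_{k+1} is stored at index k. *)
Definition path := nat -> bool.

Fixpoint prefix (xi : path) (n : nat) : list bool :=
  match n with
  | O => nil
  | S m => prefix xi m ++ (xi m :: nil)
  end.

Definition strategy := list bool -> R.

Fixpoint capital (P : strategy) (n : nat) (xi : path) : R :=
  match n with
  | O => 0
  | S m => capital P m xi + P (prefix xi m) * move_val (xi m)
  end.

Fixpoint partial_sum (xi : path) (n : nat) : R :=
  match n with
  | O => 0
  | S m => partial_sum xi m + move_val (xi m)
  end.

(* Skeptic weakly forces E. limsup_n K_n = +oo is written as
   "for every M and N there is n >= N with K_n > M". *)
Definition weakly_forces (E : path -> Prop) : Prop :=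
  exists P : strategy,
    (forall (xi : path) (n : nat), capital P n xi >= -1) /\
    (forall xi : path, ~ E xi ->
       forall (M : R) (N : nat), exists n : nat, (N <= n)%nat /\ capital P n xi > M).

Definition E2 (xi : path) : Prop :=
  forall N : nat, exists n : nat, (N <= n)%nat /\
    Rabs (partial_sum xi n) > sqrt (INR n) - 1.

(* Main.v *)
Require Import Defs.
From Stdlib Require Import Reals List Lra Lia Psatz ZArith.
From Stdlib Require Import Classical ClassicalDescription.
Open Scope R_scope.

Definition w (a : nat) : R := (/2)^(S a) / (INR a + 1).
Definition act (xi : path) (j : nat) : Prop :=
  Rabs (partial_sum xi j) <= sqrt (INR j) - 1.
Definition run (xi : path) (a k : nat) : Prop :=
  (a <= k)%nat /\ forall j, (a <= j <= k)%nat -> act xi j.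
Definition Qv (xi : path) (a k : nat) : R :=
  if excluded_middle_informative (run xi a k) then -2 * partial_sum xi k else 0.
Fixpoint Cap (xi : path) (a n : nat) : R :=
  match n with
  | O => 0
  | S m => Cap xi a m + Qv xi a m * move_val (xi m)
  end.
Definition lpath (l : list bool) : path := fun j => nth j l false.
Definition Pstrat : strategy :=
  fun l => sum_f_R0 (fun a => w a * Qv (lpath l) a (length l)) (length l).
Definition fv (xi : path) (n : nat) : R := INR n - (partial_sum xi n)^2.

Lemma length_prefix xi k : length (prefix xi k) = k.
Proof. induction k; simpl; auto. rewrite length_app, IHk; simpl; lia. Qed.

Lemma nth_prefix xi k j : (j < k)%nat -> nth j (prefix xi k) false = xi j.
Proof.
  induction k; intros H; [lia|]. simpl.
  destruct (Nat.eq_dec j k) as [->|Hne].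
  - rewrite app_nth2; rewrite length_prefix; [|lia]. rewrite Nat.sub_diag; reflexivity.
  - rewrite app_nth1; [apply IHk; lia | rewrite length_prefix; lia].
Qed.

Lemma ps_ext xi xi' k : (forall j, (j < k)%nat -> xi j = xi' j) ->
  partial_sum xi k = partial_sum xi' k.
Proof.
  induction k; intros H; simpl; auto.
  rewrite IHk by (intros; apply H; lia). rewrite H by lia. reflexivity.
Qed.

Lemma Qv_ext xi xi' a k : (forall j, (j < k)%nat -> xi j = xi' j) ->
  Qv xi a k = Qv xi' a k.
Proof.
  intros H.
  assert (Hr : run xi a k <-> run xi' a k).
  { unfold run, act. split; intros [Ha Hj]; split; auto; intros j Hjk;
    specialize (Hj j Hjk); rewrite (ps_ext xi xi' j) in * by (intros; apply H; lia);
    exact Hj. }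
  unfold Qv. rewrite (ps_ext xi xi' k H).
  destruct (excluded_middle_informative (run xi a k));
  destruct (excluded_middle_informative (run xi' a k)); tauto.
Qed.

Lemma P_prefix xi k :
  Pstrat (prefix xi k) = sum_f_R0 (fun a => w a * Qv xi a k) k.
Proof.
  unfold Pstrat. rewrite length_prefix. apply sum_eq. intros i _.
  f_equal. apply Qv_ext. intros j Hj. unfold lpath. apply nth_prefix; auto.
Qed.

Lemma Qv_zero xi a k : (k < a)%nat -> Qv xi a k = 0.
Proof.
  intros H. unfold Qv. destruct (excluded_middle_informative (run xi a k)) as [[Ha _]|]; [lia|auto].
Qed.

Lemma Cap_zero xi a n : (n <= a)%nat -> Cap xi a n = 0.
Proof.
  induction n; intros H; simpl; auto. rewrite IHn by lia. rewrite Qv_zero by lia. ring.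
Qed.

Lemma cap_sum xi n : capital Pstrat n xi = sum_f_R0 (fun a => w a * Cap xi a n) n.
Proof.
  induction n.
  - simpl. ring.
  - simpl capital. rewrite IHn, P_prefix. simpl sum_f_R0 at 2.
    rewrite tech5, (Cap_zero xi (S n) (S n)) by lia.
    rewrite Rmult_comm, scal_sum, <- plus_sum, Rmult_0_r, Rplus_0_r.
    apply sum_eq. intros i _. simpl. ring.
Qed.

Lemma mv_sq b : move_val b * move_val b = 1.
Proof. destruct b; simpl; ring. Qed.

Lemma cap_run xi a n : (a <= n)%nat -> (forall j, (a <= j < n)%nat -> act xi j) ->
  Cap xi a n = fv xi n - fv xi a.
Proof.
  induction n; intros Ha Hj.
  - assert (a = 0%nat) by lia. subst. simpl. unfold fv. ring.
  - destruct (Nat.eq_dec a (S n)) as [->|Hne].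
    + rewrite Cap_zero by lia. ring.
    + simpl. rewrite IHn by (try lia; intros; apply Hj; lia).
      unfold Qv. destruct (excluded_middle_informative (run xi a n)) as [_|Hn].
      * unfold fv. simpl partial_sum. rewrite S_INR.
        pose proof (mv_sq (xi n)). nra.
      * exfalso. apply Hn. split; [lia|]. intros; apply Hj; lia.
Qed.

Lemma sx_le (s : R) (b : bool) : s * move_val b <= Rabs s.
Proof.
  destruct b; simpl.
  - rewrite Rmult_1_r. apply Rle_abs.
  - replace (s * -1) with (- s) by ring. rewrite <- Rabs_Ropp. apply Rle_abs.
Qed.

Lemma fv_step_nonneg xi n : act xi n -> 0 <= fv xi (S n).
Proof.
  unfold act, fv. intros H. simpl partial_sum. rewrite S_INR.
  pose proof (mv_sq (xi n)). pose proof (sx_le (partial_sum xi n) (xi n)).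
  pose proof (pow2_abs (partial_sum xi n)).
  pose proof (sqrt_sqrt (INR n) (pos_INR n)).
  pose proof (Rabs_pos (partial_sum xi n)).
  set (s := partial_sum xi n) in *. set (x := move_val (xi n)) in *.
  set (q := sqrt (INR n)) in *.
  assert ((Rabs s + 1) * (Rabs s + 1) <= q * q) by (apply Rmult_le_compat; lra).
  nra.
Qed.

Lemma cap_lb xi a n : Cap xi a n >= - INR a.
Proof.
  induction n.
  - simpl. pose proof (pos_INR a). lra.
  - destruct (excluded_middle_informative (run xi a n)) as [[Ha Hr]|Hn].
    + rewrite (cap_run xi a (S n)) by (try lia; intros; apply Hr; lia).
      pose proof (fv_step_nonneg xi n (Hr n ltac:(lia))).
      unfold fv at 2. pose proof (pow2_ge_0 (partial_sum xi a)). lra.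
    + simpl. unfold Qv at 1. destruct (excluded_middle_informative (run xi a n)); [tauto|].
      lra.
Qed.

Lemma geom n : sum_f_R0 (fun a => (/2)^(S a)) n = 1 - (/2)^(S n).
Proof.
  induction n; simpl in *.
  - field.
  - rewrite IHn. field.
Qed.

Lemma w_pos a : 0 < w a.
Proof.
  unfold w. apply Rdiv_lt_0_compat. apply pow_lt; lra. pose proof (pos_INR a); lra.
Qed.

Lemma w_bound a : w a * INR a <= (/2)^(S a).
Proof.
  unfold w. pose proof (pos_INR a). pose proof (pow_lt (/2) (S a) ltac:(lra)).
  set (p := (/2)^(S a)) in *.
  apply (Rmult_le_reg_r (INR a + 1)); [lra|].
  field_simplify; [|lra]. nra.
Qed.

Lemma sum_ge_term (u : nat -> R) a n : (forall b, 0 <= u b) -> (a <= n)%nat ->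
  u a <= sum_f_R0 u n.
Proof.
  intros Hu. induction n; intros H.
  - assert (a = 0%nat) by lia. subst. simpl. lra.
  - simpl. destruct (Nat.eq_dec a (S n)) as [->|Hne].
    + pose proof (cond_pos_sum u n Hu). lra.
    + pose proof (IHn ltac:(lia)). pose proof (Hu (S n)). lra.
Qed.

Lemma cap_decomp xi n : capital Pstrat n xi =
  sum_f_R0 (fun a => w a * (Cap xi a n + INR a)) n - sum_f_R0 (fun a => w a * INR a) n.
Proof.
  rewrite cap_sum, <- minus_sum. apply sum_eq. intros; ring.
Qed.

Lemma wsum_le n : sum_f_R0 (fun a => w a * INR a) n <= 1.
Proof.
  apply Rle_trans with (sum_f_R0 (fun a => (/2)^(S a)) n).
  - apply sum_Rle. intros; apply w_bound.
  - rewrite geom. pose proof (pow_lt (/2) (S n) ltac:(lra)). lra.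
Qed.

Lemma terms_nonneg xi n b : 0 <= w b * (Cap xi b n + INR b).
Proof.
  pose proof (w_pos b). pose proof (cap_lb xi b n). nra.
Qed.

Lemma unbounded (X : R) : exists n : nat, X < INR n.
Proof.
  destruct (archimed X) as [H1 _].
  destruct (Z_le_gt_dec (up X) 0) as [Hle|Hgt].
  - exists 0%nat. simpl. apply IZR_le in Hle. lra.
  - exists (Z.to_nat (up X)). rewrite INR_IZR_INZ, Z2Nat.id by lia. lra.
Qed.

Theorem theorem2 : weakly_forces E2.
Proof.
  exists Pstrat. split.
  - intros xi n. rewrite cap_decomp.
    pose proof (cond_pos_sum _ n (terms_nonneg xi n)). pose proof (wsum_le n). lra.
  - intros xi HnE M N.
    assert (HN0 : exists N0, forall n, (N0 <= n)%nat -> act xi n).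
    { apply NNPP. intros Hc. apply HnE. intros N1.
      apply NNPP. intros Hc2. apply Hc. exists N1. intros n Hn.
      unfold act. apply Rnot_lt_le. intros Hlt. apply Hc2. exists n. split; auto. }
    destruct HN0 as [a Ha].
    pose proof (w_pos a) as Hw.
    set (K := ((M + 1) / w a + 1) / 2).
    destruct (unbounded ((Rabs K + 1)^2)) as [m Hm].
    set (n := (m + N + a)%nat).
    exists n. split; [unfold n; lia|].
    rewrite cap_decomp.
    pose proof (wsum_le n).
    pose proof (sum_ge_term _ a n (terms_nonneg xi n) ltac:(unfold n; lia)) as Hge.
    cbv beta in Hge. rewrite (cap_run xi a n) in Hge by (try (unfold n; lia); intros; apply Ha; lia).
    assert (Hfa : fv xi a <= INR a) by (unfold fv; pose proof (pow2_ge_0 (partial_sum xi a)); lra).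
    assert (Hsq : Rabs K + 1 < sqrt (INR n)).
    { assert (INR m <= INR n) by (apply le_INR; unfold n; lia).
      pose proof (Rabs_pos K).
      rewrite <- (sqrt_pow2 (Rabs K + 1)) by lra.
      apply sqrt_lt_1_alt. split; [apply pow2_ge_0|lra]. }
    assert (Hfn : 2 * sqrt (INR n) - 1 <= fv xi n).
    { pose proof (Ha n ltac:(unfold n; lia)) as Hact. unfold act in Hact. unfold fv.
      pose proof (pow2_abs (partial_sum xi n)).
      pose proof (sqrt_sqrt (INR n) (pos_INR n)).
      pose proof (Rabs_pos (partial_sum xi n)).
      set (s := partial_sum xi n) in *. set (q := sqrt (INR n)) in *.
      assert (Rabs s * Rabs s <= (q - 1) * (q - 1)) by (apply Rmult_le_compat; lra).
      nra. }
    assert (HK : K < sqrt (INR n)) by (pose proof (Rle_abs K); lra).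
    assert (Hwk : w a * (2 * K - 1) = M + 1).
    { unfold K. field. lra. }
    nra.
Qed.
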